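(* Let $\Lambda$, $(U_\alpha)_{\alpha\in\Phi}$, $\phi,\psi$ and $C$ satisfy all hypotheses of Theorem 1 (rank $2$ root group datum with finite root groups, $\Lambda$ center-free and generated by root groups, conditions (i) and (ii)), and let $\Lambda^0$ denote the intersection of all finite-index subgroups of $\Lambda$ (which is a simple subgroup of finite index). Assume in addition that one of the following holds: (i$'$) the commutator $[U_\phi,U_\psi]$ contains some root group $U_\gamma$; (i$''$) $\phi=\psi$, and if the rank one group $X_\phi=\langle U_\phi,U_{-\phi}\rangle$ acts sharply $2$-transitively (on the set of its conjugates of $U_\phi$), then $[U_\phi,U_\phi]$ has even order. Then $\Lambda/\Lambda^0$ is abelian. Moreover $|\Lambda/\Lambda^0|\leqslant \max_{\alpha\in\Phi}|U_\alpha|$ if (i$'$) holds, and $|\Lambda/\Lambda^0|\leqslant \bigl(\max_{\alpha\in\Phi}|U_\alpha/[U_\alpha,U_\alpha]|\bigr)^2$ if (i$''$) holds.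
   Context: Root group datum: a group $\Lambda$ with subgroups $(U_\alpha)_{\alpha\in\Phi}$ indexed by real roots satisfying Tits' RGD axioms; in rank 2 the Weyl group is infinite dihedral, acting on a bi-infinite line (standard twin apartment) with chambers = edges and walls = vertices; roots are half-lines bounded by walls $\partial\alpha$, distance between walls is distance along the line. A pair of roots $\{\phi,\psi\}$ is prenilpotent iff $\phi\supseteq\psi$ or $\psi\supseteq\phi$. Condition (i): $[U_\phi,U_\psi]\neq 1$ for some prenilpotent pair $\{\phi,\psi\}$ (possibly $\phi=\psi$). Condition (ii): there is $C>0$ such that root groups of any prenilpotent pair of distinct roots with walls at distance $\geqslant C$ commute. The rank one group $X_\alpha=\langle U_\alpha,U_{-\alpha}\rangle$ acts $2$-transitively on its set of conjugates of $U_\alpha$. *)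

(* Defs.v *)
From Stdlib Require Import ZArith List PeanoNat.
Import ListNotations.
Set Implicit Arguments.

Record group := Group {
  carrier :> Type;
  gmul : carrier -> carrier -> carrier;
  gone : carrier;
  ginv : carrier -> carrier;
  gmulA : forall x y z, gmul x (gmul y z) = gmul (gmul x y) z;
  gmul1 : forall x, gmul gone x = x;
  gmulV : forall x, gmul (ginv x) x = gone }.

Arguments gmul {g} _ _.
Arguments gone {g}.
Arguments ginv {g} _.

Section Groups.
Variable G : group.

Definition commutator (x y : G) : G := gmul (gmul (ginv x) (ginv y)) (gmul x y).

Definition is_subgroup (H : G -> Prop) : Prop :=
  H gone /\ (forall x y, H x -> H y -> H (gmul x y)) /\ (forall x, H x -> H (ginv x)).

Inductive gen (S : G -> Prop) : G -> Prop :=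
| gen_one : gen S gone
| gen_in : forall x, S x -> gen S x
| gen_mul : forall x y, gen S x -> gen S y -> gen S (gmul x y)
| gen_inv : forall x, gen S x -> gen S (ginv x).

Definition comm_sub (A B : G -> Prop) : G -> Prop :=
  gen (fun z => exists a b, A a /\ B b /\ z = commutator a b).

Definition subset (A B : G -> Prop) : Prop := forall x, A x -> B x.
Definition same (A B : G -> Prop) : Prop := forall x, A x <-> B x.

(* g A g^-1 *)
Definition conj_set (g : G) (A : G -> Prop) : G -> Prop :=
  fun z => A (gmul (gmul (ginv g) z) g).

Definition finite_set (A : G -> Prop) : Prop :=
  exists l : list G, forall x, A x -> In x l.

Definition has_card (A : G -> Prop) (k : nat) : Prop :=
  exists l : list G, NoDup l /\ length l = k /\ forall x, A x <-> In x l.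

Definition full : G -> Prop := fun _ => True.

Definition index_le (H K : G -> Prop) (n : nat) : Prop :=
  exists l : list G, (length l <= n)%nat /\
    forall x, H x -> exists g, In g l /\ K (gmul (ginv g) x).

Definition finite_index (H : G -> Prop) : Prop := exists n, index_le full H n.

Definition Lambda0 : G -> Prop :=
  fun x => forall H, is_subgroup H -> finite_index H -> H x.

Definition center_free : Prop :=
  forall z : G, (forall x, gmul z x = gmul x z) -> z = gone.

End Groups.

Arguments commutator {G} _ _.
Arguments is_subgroup {G} _.
Arguments gen {G} _ _.
Arguments comm_sub {G} _ _ _.
Arguments subset {G} _ _.
Arguments same {G} _ _.
Arguments conj_set {G} _ _ _.
Arguments finite_set {G} _.
Arguments has_card {G} _ _.
Arguments index_le {G} _ _ _.
Arguments finite_index {G} _.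

(* Twin apartment = line R with vertices (walls) Z, chambers = edges  *)
(* [k,k+1] indexed by k : Z.  Root (n,true) = half-line [n,+oo),       *)
(* root (n,false) = half-line (-oo,n]; its wall is n.                  *)
Open Scope Z_scope.

Definition root := (Z * bool)%type.

Definition in_root (k : Z) (a : root) : Prop :=
  if snd a then fst a <= k else k + 1 <= fst a.

Definition root_sub (a b : root) : Prop := forall k, in_root k a -> in_root k b.

Definition root_opp (a : root) : root := (fst a, negb (snd a)).

Definition prenilpotent (a b : root) : Prop := root_sub a b \/ root_sub b a.

Definition wall_dist (a b : root) : Z := Z.abs (fst a - fst b).

Definition open_interval (a b c : root) : Prop :=
  (forall k, in_root k a -> in_root k b -> in_root k c) /\
  (forall k, ~ in_root k a -> ~ in_root k b -> ~ in_root k c) /\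
  c <> a /\ c <> b.

(* fundamental chamber = [0,1] (k = 0) *)
Definition positive_root (a : root) : Prop := in_root 0 a.

Definition simple_root (a : root) : Prop := positive_root a /\ (fst a = 0 \/ fst a = 1).

Definition reflect_root (v : Z) (a : root) : root := (2 * v - fst a, negb (snd a)).

Section RGD.
Variable G : group.
Variable U : root -> G -> Prop.

Definition U_union (P : root -> Prop) : G -> Prop := fun z => exists c, P c /\ U c z.

(* Tits' RGD axioms (RGD4 is implied by the generation hypothesis of the theorem) *)
Definition RGD : Prop :=
  (forall a, is_subgroup (U a)) /\
  (forall a, exists u, U a u /\ u <> gone) /\
  (forall a b, prenilpotent a b -> a <> b ->
     subset (comm_sub (U a) (U b)) (gen (U_union (open_interval a b)))) /\
  (forall a, simple_root a -> forall u, U a u -> u <> gone ->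
     exists u' u'', U (root_opp a) u' /\ U (root_opp a) u'' /\
       forall b, same (conj_set (gmul (gmul u' u) u'') (U b)) (U (reflect_root (fst a) b))) /\
  (forall a, simple_root a ->
     exists x, U (root_opp a) x /\ ~ gen (U_union positive_root) x).

Definition cond_i (phi psi : root) : Prop :=
  prenilpotent phi psi /\ exists x, comm_sub (U phi) (U psi) x /\ x <> gone.

Definition cond_ii (C : Z) : Prop :=
  0 < C /\ forall a b, prenilpotent a b -> a <> b -> C <= wall_dist a b ->
    forall x y, U a x -> U b y -> commutator x y = gone.

Definition rank_one (a : root) : G -> Prop :=
  gen (fun z => U a z \/ U (root_opp a) z).

(* X_a acts (by conjugation) sharply 2-transitively on {g U_a g^-1 : g in X_a}:
   the induced permutation group is 2-transitive and two-point stabilisers act trivially *)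
Definition sharply_2_transitive (a : root) : Prop :=
  let X := rank_one a in
  let pt g := conj_set g (U a) in
  (forall g1 h1 g2 h2, X g1 -> X h1 -> X g2 -> X h2 ->
     ~ same (pt g1) (pt h1) -> ~ same (pt g2) (pt h2) ->
     exists x, X x /\ same (conj_set x (pt g1)) (pt g2) /\
                      same (conj_set x (pt h1)) (pt h2)) /\
  (forall x g h, X x -> X g -> X h -> ~ same (pt g) (pt h) ->
     same (conj_set x (pt g)) (pt g) -> same (conj_set x (pt h)) (pt h) ->
     forall k, X k -> same (conj_set x (pt k)) (pt k)).

Definition cond_i' (phi psi : root) : Prop :=
  exists c, subset (U c) (comm_sub (U phi) (U psi)).

Definition cond_i'' (phi psi : root) : Prop :=
  phi = psi /\
  (sharply_2_transitive phi ->
     exists k, has_card (comm_sub (U phi) (U phi)) k /\ Nat.Even k).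

End RGD.
Arguments RGD {G} U.
Arguments cond_i {G} U phi psi.
Arguments cond_ii {G} U C.
Arguments cond_i' {G} U phi psi.
Arguments cond_i'' {G} U phi psi.
Arguments sharply_2_transitive {G} U a.
Arguments rank_one {G} U a _.
Arguments U_union {G} U P _.

(* Main.v *)
Require Import Defs.
From Stdlib Require Import ZArith List PeanoNat.
From Stdlib Require Import Lia Classical ClassicalEpsilon Factorial.
Import ListNotations.
Set Implicit Arguments.


Notation "x · y" := (gmul x y) (at level 40, left associativity).

Lemma mA {G : group} (x y z : G) : x · y · z = x · (y · z).
Proof. symmetry; apply gmulA. Qed.
Lemma m1l {G : group} (x : G) : gone · x = x.
Proof. apply gmul1. Qed.
Lemma mVl {G : group} (x : G) : ginv x · x = gone.
Proof. apply gmulV. Qed.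
Lemma mVl' {G : group} (x y : G) : ginv x · (x · y) = y.
Proof. rewrite gmulA, gmulV, gmul1. reflexivity. Qed.
Lemma mVr {G : group} (x : G) : x · ginv x = gone.
Proof.
  rewrite <- (gmul1 _ (x · ginv x)).
  rewrite <- (gmulV _ (ginv x)) at 1.
  rewrite mA, (gmulA _ (ginv x) x), gmulV, gmul1, gmulV. reflexivity.
Qed.
Lemma m1r {G : group} (x : G) : x · gone = x.
Proof. rewrite <- (gmulV _ x), gmulA, mVr, gmul1. reflexivity. Qed.
Lemma mVr' {G : group} (x y : G) : x · (ginv x · y) = y.
Proof. rewrite gmulA, mVr, gmul1. reflexivity. Qed.
Lemma inv_uniq {G : group} (x y : G) : x · y = gone -> ginv x = y.
Proof. intro H. rewrite <- (m1r (ginv x)), <- H, mVl'. reflexivity. Qed.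
Lemma iM {G : group} (x y : G) : ginv (x · y) = ginv y · ginv x.
Proof. apply inv_uniq. rewrite mA, (gmulA _ y), mVr, gmul1, mVr. reflexivity. Qed.
Lemma ii {G : group} (x : G) : ginv (ginv x) = x.
Proof. apply inv_uniq. apply mVl. Qed.
Lemma i1 {G : group} : ginv (@gone G) = gone.
Proof. apply inv_uniq. apply gmul1. Qed.

Hint Rewrite @mA @m1l @m1r @mVl @mVl' @mVr @mVr' @iM @ii @i1 : grp.
Ltac gs := autorewrite with grp.

Lemma lcancel {G : group} (x y z : G) : x · y = x · z -> y = z.
Proof. intro H. rewrite <- (mVl' x y), H. gs. reflexivity. Qed.
Lemma rcancel {G : group} (x y z : G) : y · x = z · x -> y = z.
Proof. intro H. rewrite <- (m1r y), <- (mVr x), <- mA, H. gs. reflexivity. Qed.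

Lemma comm_one {G : group} (x y : G) : commutator x y = gone -> x · y = y · x.
Proof. unfold commutator. intro H. apply (lcancel (ginv x · ginv y)). rewrite H.
  gs. reflexivity. Qed.

Fixpoint gpow {G : group} (x : G) (n : nat) : G :=
  match n with O => gone | S n => x · gpow x n end.

Lemma gpow_add {G : group} (x : G) a b : gpow x (a + b)%nat = gpow x a · gpow x b.
Proof. induction a; simpl; gs; [reflexivity| rewrite IHa; reflexivity]. Qed.
Lemma gpow_mul {G : group} (x : G) a b : gpow x (a * b)%nat = gpow (gpow x a) b.
Proof. rewrite Nat.mul_comm. induction b; simpl. reflexivity.
  rewrite gpow_add, IHb. reflexivity. Qed.
Lemma gpow_conj {G : group} (g x : G) q : ginv g · (gpow x q · g) = gpow (ginv g · (x · g)) q.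
Proof. induction q; simpl; gs. reflexivity. rewrite <- IHq. gs. reflexivity. Qed.
Lemma sub_pow {G : group} (H : G -> Prop) x q : is_subgroup H -> H x -> H (gpow x q).
Proof. intros [H1 [H2 H3]] Hx. induction q; simpl; auto. Qed.


Definition nsub {G : group} (N : G -> Prop) : Prop :=
  is_subgroup N /\ forall g x, N x -> N (g · (x · ginv g)).
Definition eqv {G : group} (N : G -> Prop) (x y : G) : Prop := N (ginv x · y).
Definition cm {G : group} (N : G -> Prop) (x y : G) : Prop := eqv N (x · y) (y · x).

Lemma sg1 {G : group} {N : G -> Prop} : is_subgroup N -> N gone.
Proof. intros [? _]; auto. Qed.
Lemma sgM {G : group} {N : G -> Prop} {x y : G} : is_subgroup N -> N x -> N y -> N (x · y).
Proof. intros [_ [? _]]; auto. Qed.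
Lemma sgV {G : group} {N : G -> Prop} {x : G} : is_subgroup N -> N x -> N (ginv x).
Proof. intros [_ [_ ?]]; auto. Qed.
Lemma sgE {G : group} {N : G -> Prop} {x y : G} : N x -> x = y -> N y.
Proof. intros; subst; auto. Qed.

Lemma nconj' {G : group} {N : G -> Prop} g {x : G} : nsub N -> N x -> N (ginv g · (x · g)).
Proof. intros [_ Hn] Hx. apply (sgE (Hn (ginv g) x Hx)). gs. reflexivity. Qed.

Lemma eqv_refl {G : group} {N : G -> Prop} x : nsub N -> eqv N x x.
Proof. intros [HN _]. unfold eqv. gs. apply sg1; auto. Qed.
Lemma eqv_sym {G : group} {N : G -> Prop} {x y : G} : nsub N -> eqv N x y -> eqv N y x.
Proof. intros [HN _] H. unfold eqv in *. apply (sgE (sgV HN H)). gs. reflexivity. Qed.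
Lemma eqv_trans {G : group} {N : G -> Prop} {x y z : G} : nsub N -> eqv N x y -> eqv N y z -> eqv N x z.
Proof. intros [HN _] H1 H2. unfold eqv in *. apply (sgE (sgM HN H1 H2)). gs. reflexivity. Qed.
Lemma eqv_mul {G : group} {N : G -> Prop} {x x' y y' : G} : nsub N -> eqv N x x' -> eqv N y y' -> eqv N (x · y) (x' · y').
Proof. intros HNN H1 H2. unfold eqv in *.
  pose proof (nconj' y HNN H1) as H3. destruct HNN as [HN _].
  apply (sgE (sgM HN H3 H2)). gs. reflexivity. Qed.
Lemma eqv_inv {G : group} {N : G -> Prop} {x x' : G} : nsub N -> eqv N x x' -> eqv N (ginv x) (ginv x').
Proof. intros HNN H1. unfold eqv in *.
  pose proof (nconj' (ginv x') HNN H1) as H3. destruct HNN as [HN _].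
  apply (sgE (sgV HN H3)). gs. reflexivity. Qed.
Lemma eqv_eq {G : group} (N : G -> Prop) x y : nsub N -> x = y -> eqv N x y.
Proof. intros; subst; apply eqv_refl; auto. Qed.
Lemma eqv_N {G : group} (N : G -> Prop) x : eqv N gone x <-> N x.
Proof. unfold eqv. gs. tauto. Qed.

Lemma eqv_l {G : group} (N : G -> Prop) x x' y : x = x' -> eqv N x' y -> eqv N x y.
Proof. intros; subst; auto. Qed.
Lemma eqv_r {G : group} (N : G -> Prop) x y y' : y = y' -> eqv N x y' -> eqv N x y.
Proof. intros; subst; auto. Qed.

Lemma cm_N_comm {G : group} (N : G -> Prop) x y : cm N y x -> N (commutator x y).
Proof. unfold cm, eqv, commutator. intro H. apply (sgE H). gs. reflexivity. Qed.
Lemma cm_of_comm {G : group} (N : G -> Prop) x y : nsub N -> commutator x y = gone -> cm N x y.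
Proof. intros HN H. apply comm_one in H. unfold cm. rewrite H. apply eqv_refl; auto. Qed.

Lemma cm_sym {G : group} {N : G -> Prop} {x y : G} : nsub N -> cm N x y -> cm N y x.
Proof. intros HN H. apply eqv_sym; auto. Qed.
Lemma cm_eqv {G : group} {N : G -> Prop} {x y y' : G} : nsub N -> eqv N y y' -> cm N x y' -> cm N x y.
Proof. intros HN E H. unfold cm in *.
  apply (eqv_trans (y := x · y')); [auto| |].
  - apply eqv_mul; [auto| apply eqv_refl; auto | auto].
  - apply (eqv_trans (y := y' · x)); [auto| exact H | ].
    apply eqv_mul; [auto| apply eqv_sym; auto| apply eqv_refl; auto].
Qed.
Lemma cm_one {G : group} (N : G -> Prop) x : nsub N -> cm N x gone.
Proof. intros. unfold cm. gs. apply eqv_refl; auto. Qed.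
Lemma cm_mul {G : group} {N : G -> Prop} {x y z : G} : nsub N -> cm N x y -> cm N x z -> cm N x (y · z).
Proof. intros HN H1 H2. unfold cm in *.
  apply (eqv_trans (y := x · y · z)); [auto| apply eqv_eq; auto; gs; reflexivity|].
  apply (eqv_trans (y := y · x · z)); [auto| apply eqv_mul; auto; apply eqv_refl; auto|].
  apply (eqv_trans (y := y · (x · z))); [auto| apply eqv_eq; auto; gs; reflexivity|].
  apply (eqv_trans (y := y · (z · x))); [auto| apply eqv_mul; auto; apply eqv_refl; auto|].
  apply eqv_eq; auto; gs; reflexivity.
Qed.
Lemma cm_inv {G : group} {N : G -> Prop} {x y : G} : nsub N -> cm N x y -> cm N x (ginv y).
Proof. intros HN H. unfold cm in *.
  assert (E := eqv_mul HN (eqv_refl (ginv y) HN) (eqv_mul HN H (eqv_refl (ginv y) HN))).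
  apply eqv_sym; auto. revert E. gs. auto.
Qed.
Lemma cm_gen {G : group} (N : G -> Prop) (S : G -> Prop) x : nsub N ->
  (forall z, S z -> cm N x z) -> forall y, gen S y -> cm N x y.
Proof. intros HN HS y Hy. induction Hy; auto using cm_one, cm_mul, cm_inv. Qed.
Lemma cm_conj {G : group} {N : G -> Prop} {g w : G} : nsub N -> cm N g w -> eqv N (g · (w · ginv g)) w.
Proof. intros HN H. unfold cm in H.
  assert (E := eqv_mul HN H (eqv_refl (ginv g) HN)). revert E. gs. auto. Qed.

Definition core {G : group} (H : G -> Prop) : G -> Prop := fun x => forall g, H (ginv g · (x · g)).

Lemma core_nsub {G : group} (H : G -> Prop) : is_subgroup H -> nsub (core H).
Proof. intros HH. unfold core. split; [split; [|split]|].
  - intro g. gs. apply sg1; auto.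
  - intros x y Hx Hy g. apply (sgE (sgM HH (Hx g) (Hy g))). gs. reflexivity.
  - intros x Hx g. apply (sgE (sgV HH (Hx g))). gs. reflexivity.
  - intros h x Hx g. apply (sgE (Hx (ginv h · g))). gs. reflexivity.
Qed.
Lemma core_sub {G : group} (H : G -> Prop) x : core H x -> H x.
Proof. intro Hx. apply (sgE (Hx gone)). gs. reflexivity. Qed.


Lemma div_fact a n : (1 <= a <= n)%nat -> Nat.divide a (fact n).
Proof. induction n; intros Ha. lia.
  simpl fact. destruct (Nat.eq_dec a (S n)) as [->|Hne].
  - exists (fact n). lia.
  - destruct (IHn ltac:(lia)) as [q Hq]. exists (q + n * q)%nat. rewrite Hq. lia.
Qed.

Lemma per_g {G : group} (H : G -> Prop) n : is_subgroup H -> index_le (full G) H n ->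
  forall (g x : G), exists a, (1 <= a <= n)%nat /\ H (ginv g · (gpow x a · g)).
Proof.
  intros HH [l [Hlen Hcov]] g x.
  set (P := fun j r => In r l /\ H (ginv r · (gpow x j · g))).
  set (r := fun j => epsilon (inhabits (@gone G)) (P j)).
  assert (Hr : forall j, P j (r j)).
  { intro j. apply epsilon_spec. apply (Hcov (gpow x j · g) I). }
  destruct (classic (exists i j, (i < j <= n)%nat /\ r i = r j)) as [[i [j [Hij E]]]|Hno].
  - exists (j - i)%nat. split. lia.
    destruct (Hr i) as [_ Hi]. destruct (Hr j) as [_ Hj]. rewrite <- E in Hj.
    pose proof (sgM HH (sgV HH Hi) Hj) as K.
    replace j with (i + (j - i))%nat in K by lia. rewrite gpow_add in K.
    apply (sgE K). gs. reflexivity.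
  - exfalso.
    assert (ND : NoDup (map r (seq 0 (S n)))).
    { apply NoDup_map_NoDup_ForallPairs; [|apply seq_NoDup].
      intros a b Ha Hb E. apply in_seq in Ha. apply in_seq in Hb.
      destruct (Nat.lt_trichotomy a b) as [h|[h|h]]; auto.
      - exfalso; apply Hno. exists a, b. split; [lia|auto].
      - exfalso; apply Hno. exists b, a. split; [lia|auto]. }
    assert (INC : incl (map r (seq 0 (S n))) l).
    { intros y Hy. apply in_map_iff in Hy. destruct Hy as [j [<- _]]. apply (Hr j). }
    pose proof (NoDup_incl_length ND INC) as L. rewrite length_map, length_seq in L. lia.
Qed.

Lemma core_pow {G : group} (H : G -> Prop) n : is_subgroup H -> index_le (full G) H n ->
  forall x : G, exists k, (1 <= k)%nat /\ core H (gpow x k).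
Proof.
  intros HH Hi x. exists (fact n). split. { pose proof (lt_O_fact n); lia. }
  intro g. destruct (per_g HH Hi g x) as [a [Ha Hg]].
  destruct (div_fact Ha) as [q Hq]. rewrite Hq, Nat.mul_comm, gpow_mul, gpow_conj.
  apply sub_pow; auto.
Qed.

Lemma fi_inter {G : group} (H1 H2 : G -> Prop) n1 n2 :
  is_subgroup H1 -> is_subgroup H2 -> index_le (full G) H1 n1 -> index_le (full G) H2 n2 ->
  index_le (full G) (fun x => H1 x /\ H2 x) (n1 * n2).
Proof.
  intros S1 S2 [l1 [L1 C1]] [l2 [L2 C2]].
  set (f := fun p : G * G => epsilon (inhabits (@gone G))
              (fun z => H1 (ginv (fst p) · z) /\ H2 (ginv (snd p) · z))).
  exists (map f (list_prod l1 l2)). split.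
  - rewrite length_map, length_prod. apply Nat.mul_le_mono; auto.
  - intros x _. destruct (C1 x I) as [a [Ia Ha]]. destruct (C2 x I) as [b [Ib Hb]].
    exists (f (a, b)). split. apply in_map. apply in_prod; auto.
    assert (E : H1 (ginv (fst (a,b)) · f (a,b)) /\ H2 (ginv (snd (a,b)) · f (a,b))).
    { apply epsilon_spec. exists x. auto. }
    simpl in E. destruct E as [E1 E2]. split.
    + apply (sgE (sgM S1 (sgV S1 E1) Ha)). gs. reflexivity.
    + apply (sgE (sgM S2 (sgV S2 E2) Hb)). gs. reflexivity.
Qed.

Lemma full_sub {G : group} : is_subgroup (full G).
Proof. unfold full. repeat split. Qed.
Lemma full_fi {G : group} : finite_index (full G).
Proof. exists 1%nat. exists [gone]. split. simpl; lia. intros x _. exists gone. split; [left; auto| exact I]. Qed.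

Lemma inter_sub {G : group} (H1 H2 : G -> Prop) :
  is_subgroup H1 -> is_subgroup H2 -> is_subgroup (fun x => H1 x /\ H2 x).
Proof. intros S1 S2. split; [|split].
  - split; apply sg1; auto.
  - intros x y [] []. split; apply sgM; auto.
  - intros x []. split; apply sgV; auto.
Qed.

Lemma build_H {G : group} (x : G) (R : list G) :
  (forall r, In r R -> exists H, is_subgroup H /\ finite_index H /\ ~ H (ginv r · x)) ->
  exists H, is_subgroup H /\ finite_index H /\ forall r, In r R -> ~ H (ginv r · x).
Proof.
  induction R as [|a R IH]; intros Hall.
  - exists (full G). split; [apply full_sub|split; [apply full_fi|]]. intros r [].
  - destruct IH as [H [SH [FH NH]]]. { intros r Hr. apply Hall. right; auto. }
    destruct (Hall a (or_introl eq_refl)) as [K [SK [FK NK]]].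
    exists (fun y => H y /\ K y). split; [apply inter_sub; auto|split].
    + destruct FH as [n1 F1]. destruct FK as [n2 F2]. exists (n1 * n2)%nat. apply fi_inter; auto.
    + intros r [<-|Hr] [A B]; [apply NK; auto| apply (NH r Hr); auto].
Qed.

Lemma unif {G : group} (R : list G) (x : G) :
  (forall H, is_subgroup H -> finite_index H -> exists r, In r R /\ H (ginv r · x)) ->
  exists r, In r R /\ Lambda0 G (ginv r · x).
Proof.
  intro Hyp. apply NNPP. intro Hn.
  destruct (@build_H G x R) as [H [SH [FH NH]]].
  - intros r Hr. apply NNPP. intro Hc. apply Hn. exists r. split; auto.
    intros K SK FK. apply NNPP. intro Hk. apply Hc. exists K. auto.
  - destruct (Hyp H SH FH) as [r [Hr Hh]]. apply (NH r Hr Hh).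
Qed.

Lemma index_final {G : group} (R : list G) M : (length R <= M)%nat ->
  (forall x, forall H, is_subgroup H -> finite_index H -> exists r, In r R /\ H (ginv r · x)) ->
  index_le (full G) (Lambda0 G) M.
Proof. intros L Hyp. exists R. split; auto. intros x _. apply unif. apply Hyp. Qed.


Lemma prenil_dir (a b : root) : prenilpotent a b -> snd a = snd b.
Proof.
  destruct a as [n e], b as [m f]. unfold prenilpotent, root_sub, in_root; simpl.
  destruct e, f; auto; intros [H|H].
  - specialize (H (Z.max n m)). lia.
  - specialize (H (Z.min n m - 1)). lia.
  - specialize (H (Z.min n m - 1)). lia.
  - specialize (H (Z.max n m)). lia.
Qed.

Lemma dir_prenil (a b : root) : snd a = snd b -> prenilpotent a b.
Proof.
  destruct a as [n e], b as [m f]. unfold prenilpotent, root_sub, in_root; simpl.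
  intros <-. destruct e; destruct (Z.le_gt_cases n m).
  - right; intros; lia.
  - left; intros; lia.
  - left; intros; lia.
  - right; intros; lia.
Qed.

Definition Conn {G : group} (U : root -> G -> Prop) (b c : root) : Prop :=
  exists g : G, forall y, (U b y -> U c (g · (y · ginv g))) /\ (U c y -> U b (ginv g · (y · g))).

Lemma conn_refl {G : group} (U : root -> G -> Prop) b : Conn U b b.
Proof. exists gone. intro y. gs. tauto. Qed.
Lemma conn_sym {G : group} (U : root -> G -> Prop) b c : Conn U b c -> Conn U c b.
Proof. intros [g Hg]. exists (ginv g). intro y. gs. split; apply Hg. Qed.
Lemma conn_trans {G : group} (U : root -> G -> Prop) b c d : Conn U b c -> Conn U c d -> Conn U b d.
Proof. intros [g Hg] [h Hh]. exists (h · g). intro y. split; intro Hy.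
  - apply (sgE (proj1 (Hh _) (proj1 (Hg _) Hy))). gs. reflexivity.
  - apply (sgE (proj2 (Hg _) (proj2 (Hh _) Hy))). gs. reflexivity.
Qed.

Lemma refl_u {G : group} (U : root -> G -> Prop) a u : RGD U -> simple_root a -> U a u -> u <> gone ->
  exists u' u'', U (root_opp a) u' /\ U (root_opp a) u'' /\
   forall b y, (U b y -> U (reflect_root (fst a) b) ((u' · u · u'') · (y · ginv (u' · u · u'')))) /\
               (U (reflect_root (fst a) b) y -> U b (ginv (u' · u · u'') · (y · (u' · u · u'')))).
Proof.
  intros [_ [_ [_ [H2 _]]]] Hs Hu Hne.
  destruct (H2 a Hs u Hu Hne) as [u' [u'' [A [B C]]]].
  exists u', u''. split; auto. split; auto. intros b y. split; intro Hy.
  - apply (C b). unfold conj_set. apply (sgE Hy). gs. reflexivity.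
  - apply (C b) in Hy. unfold conj_set in Hy. apply (sgE Hy). gs. reflexivity.
Qed.

Lemma refl_any {G : group} (U : root -> G -> Prop) a : RGD U -> simple_root a ->
  exists m : G, forall b y, (U b y -> U (reflect_root (fst a) b) (m · (y · ginv m))) /\
               (U (reflect_root (fst a) b) y -> U b (ginv m · (y · m))).
Proof.
  intros HR Hs. pose proof HR as [_ [H0 _]]. destruct (H0 a) as [u [Hu Hne]].
  destruct (refl_u HR Hs Hu Hne) as [u' [u'' [_ [_ C]]]]. eexists. exact C.
Qed.

Definition a0 : root := (0, true).
Definition a1 : root := (1, false).
Lemma a0_simple : simple_root a0.
Proof. unfold simple_root, positive_root, in_root, a0; simpl. split; lia. Qed.
Lemma a1_simple : simple_root a1.
Proof. unfold simple_root, positive_root, in_root, a1; simpl. split; lia. Qed.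

Definition target (n : Z) : root := if Z.even n then a0 else a1.
Lemma target_simple n : simple_root (target n).
Proof. unfold target; destruct (Z.even n); [apply a0_simple|apply a1_simple]. Qed.

Lemma conn_refl_elem {G : group} {U : root -> G -> Prop} {a b : root} : RGD U -> simple_root a ->
  Conn U b (reflect_root (fst a) b).
Proof. intros HR Hs. destruct (refl_any HR Hs) as [m Hm]. exists m. intro y. apply Hm. Qed.

Lemma conn_eq {G : group} (U : root -> G -> Prop) b c : b = c -> Conn U b c.
Proof. intros ->; apply conn_refl. Qed.

Lemma conn_shift {G : group} (U : root -> G -> Prop) n e : RGD U -> Conn U (n, e) (n + 2, e).
Proof.
  intro HR. eapply conn_trans. apply (conn_refl_elem (b := (n,e)) HR a0_simple).
  eapply conn_trans. apply (conn_refl_elem HR a1_simple).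
  apply conn_eq. unfold reflect_root, a0, a1; cbn [fst snd]. f_equal. lia. destruct e; reflexivity.
Qed.

Lemma even2 n : Z.even (n + 2) = Z.even n.
Proof. rewrite Z.even_add. simpl. destruct (Z.even n); reflexivity. Qed.
Lemma even1 n : Z.even (n + 1) = negb (Z.even n).
Proof. rewrite Z.even_add. simpl. destruct (Z.even n); reflexivity. Qed.

Lemma conn_target {G : group} (U : root -> G -> Prop) b : RGD U -> Conn U b (target (fst b)).
Proof.
  intro HR. destruct b as [n e]. simpl.
  set (P := fun n => forall e, Conn U (n, e) (target n)).
  assert (P0 : P 0).
  { intro f. destruct f. apply conn_refl.
    eapply conn_trans. apply (conn_refl_elem HR a0_simple). apply conn_eq. reflexivity. }
  assert (P1 : P 1).
  { intro f. destruct f.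
    eapply conn_trans. apply (conn_refl_elem HR a1_simple). apply conn_eq. reflexivity.
    apply conn_refl. }
  assert (Up : forall n, P n -> P (n + 2)).
  { intros k Hk f. eapply conn_trans. apply conn_sym, conn_shift; auto.
    unfold target. rewrite even2. apply Hk. }
  assert (Dn : forall n, P (n + 2) -> P n).
  { intros k Hk f. eapply conn_trans. apply conn_shift; auto.
    unfold target. rewrite <- (even2 k). apply Hk. }
  assert (All : forall m : nat, forall k, Z.abs k <= Z.of_nat m -> P k).
  { induction m as [|m IH]; intros k Hk.
    - replace k with 0 by lia. exact P0.
    - destruct (Z.eq_dec k 0) as [->|]; [exact P0|].
      destruct (Z.eq_dec k 1) as [->|]; [exact P1|].
      destruct (Z_le_gt_dec 2 k).
      + replace k with ((k - 2) + 2) by lia. apply Up. apply IH. lia.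
      + apply Dn. destruct (Z.eq_dec (k + 2) 0) as [E|]; [rewrite E; exact P0|].
        destruct (Z.eq_dec (k + 2) 1) as [E|]; [rewrite E; exact P1|].
        apply IH. lia. }
  apply (All (Z.to_nat (Z.abs n))). lia.
Qed.

Lemma tr_elem {G : group} (U : root -> G -> Prop) : RGD U -> exists t : G,
  forall j n e y, U (n, e) y -> U (n + 2 * Z.of_nat j, e) (gpow t j · (y · ginv (gpow t j))).
Proof.
  intro HR. destruct (refl_any HR a0_simple) as [m0 H0]. destruct (refl_any HR a1_simple) as [m1 H1].
  exists (m1 · m0).
  assert (Step : forall n e y, U (n, e) y -> U (n + 2, e) ((m1 · m0) · (y · ginv (m1 · m0)))).
  { intros n e y Hy. apply (proj1 (H0 _ _)) in Hy. apply (proj1 (H1 _ _)) in Hy.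
    unfold reflect_root, a0, a1 in Hy; cbn [fst snd] in Hy.
    replace (2 * 1 - (2 * 0 - n)) with (n + 2) in Hy by lia. rewrite Bool.negb_involutive in Hy.
    apply (sgE Hy). gs. reflexivity. }
  induction j as [|j IH]; intros n e y Hy.
  - simpl gpow. replace (n + 2 * Z.of_nat 0) with n by lia. apply (sgE Hy). gs. reflexivity.
  - pose proof (Step _ _ _ (IH n e y Hy)) as K. simpl gpow.
    replace (n + 2 * Z.of_nat (S j)) with (n + 2 * Z.of_nat j + 2) by lia.
    apply (sgE K). gs. reflexivity.
Qed.


Lemma far_cm {G : group} (U : root -> G -> Prop) C (N : G -> Prop) :
  RGD U -> cond_ii U C -> nsub N -> (forall x : G, exists k, (1 <= k)%nat /\ N (gpow x k)) ->
  forall b c y z, snd b = snd c -> U b y -> U c z -> cm N y z.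
Proof.
  intros HR [HC Hii] HN Hpow [nb e] [nc f] y z Hd Hy Hz. simpl in Hd. subst f.
  destruct (tr_elem HR) as [t Ht]. destruct (Hpow t) as [k [Hk Nk]].
  set (J := Z.to_nat (C + Z.abs (nb - nc))).
  set (p := gpow t (k * J)).
  assert (Np : N p). { unfold p. rewrite gpow_mul. apply sub_pow; auto. apply HN. }
  pose proof (Ht (k * J)%nat nc e z Hz) as Hz'. fold p in Hz'.
  assert (E : eqv N z (p · (z · ginv p))).
  { unfold eqv. pose proof (nconj' z HN Np) as K.
    apply (sgE (sgM (proj1 HN) K (sgV (proj1 HN) Np))). gs. reflexivity. }
  apply (cm_eqv HN E). apply cm_of_comm; auto.
  assert (L1 : (J <= k * J)%nat) by (pose proof (Nat.mul_le_mono_r 1 k J Hk); lia).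
  apply Nat2Z.inj_le in L1.
  assert (L2 : Z.of_nat J = C + Z.abs (nb - nc)) by (unfold J; rewrite Z2Nat.id; lia).
  set (X := Z.of_nat (k * J)) in *. clearbody X J p.
  apply (Hii (nb, e) (nc + 2 * X, e)); auto.
  - apply dir_prenil; reflexivity.
  - intro Heq. assert (nb = nc + 2 * X) by (change nb with (fst (nb, e)); rewrite Heq; reflexivity). lia.
  - unfold wall_dist; cbn [fst]. lia.
Qed.

Lemma comm_in_N {G : group} (U : root -> G -> Prop) (N : G -> Prop) b c :
  nsub N -> (forall b c y z, snd b = snd c -> U b y -> U c z -> cm N y z) ->
  snd b = snd c -> forall x, comm_sub (U b) (U c) x -> N x.
Proof.
  intros HN Hsd Hbc x Hx. induction Hx as [|x [p [q [Hp [Hq ->]]]]| |].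
  - apply sg1, HN.
  - apply cm_N_comm. apply (Hsd c b); auto.
  - apply sgM; auto. apply HN.
  - apply sgV; auto. apply HN.
Qed.

Lemma comm_sub_self {G : group} (A : G -> Prop) x : is_subgroup A -> comm_sub A A x -> A x.
Proof.
  intros HA Hx. induction Hx as [|x [p [q [Hp [Hq ->]]]]| |].
  - apply sg1, HA.
  - unfold commutator. repeat apply sgM; auto; apply sgV; auto.
  - apply sgM; auto.
  - apply sgV; auto.
Qed.

Lemma cm_eqvl {G : group} {N : G -> Prop} {x x' y : G} : nsub N -> eqv N x x' -> cm N x' y -> cm N x y.
Proof. intros HN E H. apply cm_sym; auto. apply (cm_eqv HN E). apply cm_sym; auto. Qed.

Lemma opp_refl (a : root) : reflect_root (fst a) (root_opp a) = a.
Proof. destruct a as [n s]. unfold reflect_root, root_opp; cbn [fst snd]. f_equal. lia.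
  destruct s; reflexivity. Qed.

Lemma key {G : group} (U : root -> G -> Prop) (N : G -> Prop) a u :
  RGD U -> nsub N -> (forall b c y z, snd b = snd c -> U b y -> U c z -> cm N y z) ->
  simple_root a -> U a u -> N u -> u <> gone ->
  exists m : G, (forall b y, U b y -> U (reflect_root (fst a) b) (m · (y · ginv m))) /\
                (forall b w, U b w -> cm N m w).
Proof.
  intros HR HN Hsd Hs Hu Nu Hne.
  destruct (refl_u HR Hs Hu Hne) as [u' [u'' [A [B C]]]].
  set (m := u' · u · u''). fold m in C.
  exists m. split. { intros b y Hy. apply (C b y). auto. }
  pose proof HR as [Hsg _].
  set (v := u' · u'').
  assert (Hv : U (root_opp a) v) by (apply sgM; auto).
  assert (Emv : eqv N m v).
  { unfold eqv, m, v. apply (sgE (nconj' u'' HN (sgV (proj1 HN) Nu))). gs. reflexivity. }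
  assert (Ev : eqv N v (m · (v · ginv m))).
  { apply eqv_sym; auto. apply cm_conj; auto. apply (cm_eqvl HN Emv).
    apply (Hsd (root_opp a) (root_opp a)); auto. }
  assert (Hv' : U a (m · (v · ginv m))).
  { rewrite <- (opp_refl a) at 1. apply (C _ _). auto. }
  intros b w Hw. apply (cm_eqvl HN Emv).
  destruct (Bool.bool_dec (snd b) (snd (root_opp a))) as [D|D].
  - apply (Hsd (root_opp a) b); auto.
  - apply (cm_eqvl HN Ev). apply (Hsd a b); auto.
    destruct a as [na sa]; unfold root_opp in D; simpl in D |- *. destruct sa, (snd b); simpl in *; auto; congruence.
Qed.

Lemma abel {G : group} (U : root -> G -> Prop) (N : G -> Prop) :
  RGD U -> nsub N -> (forall x : G, gen (fun z => exists a, U a z) x) ->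
  (forall b c y z, snd b = snd c -> U b y -> U c z -> cm N y z) ->
  (exists c u, U c u /\ N u /\ u <> gone) -> forall x y : G, cm N x y.
Proof.
  intros HR HN Hgen Hsd [c [u [Hu [Nu Hne]]]].
  destruct (conn_target c HR) as [g Hg].
  set (a := target (fst c)) in *.
  assert (Hu2 : U a (g · (u · ginv g))) by (apply Hg; auto).
  assert (Nu2 : N (g · (u · ginv g))) by (apply HN; auto).
  assert (Hne2 : g · (u · ginv g) <> gone).
  { intro E. apply Hne. apply (lcancel g). apply (rcancel (ginv g)). rewrite mA, E. gs. reflexivity. }
  destruct (key HR HN Hsd (target_simple (fst c)) Hu2 Nu2 Hne2) as [m [Hm1 Hm2]].
  assert (Gens : forall y z, (exists a, U a y) -> (exists a, U a z) -> cm N y z).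
  { intros y z [b Hy] [d Hz].
    destruct (Bool.bool_dec (snd b) (snd d)) as [D|D]. apply (Hsd b d); auto.
    assert (E : eqv N z (m · (z · ginv m))) by (apply eqv_sym; auto; apply cm_conj; auto; apply (Hm2 d); auto).
    apply (cm_eqv HN E). apply (Hsd b (reflect_root (fst a) d)); auto.
    unfold reflect_root; cbn [snd]. destruct (snd b), (snd d); auto; congruence. }
  set (S := fun z : G => exists a, U a z).
  assert (S1 : forall z, S z -> forall x, cm N z x).
  { intros z Hz x. apply (@cm_gen _ N S z HN); auto. }
  intros x y. apply cm_sym; auto.
  apply (@cm_gen _ N S y HN); auto.
  intros z Hz. apply cm_sym; auto.
Qed.

Lemma image {G : group} (U : root -> G -> Prop) (N : G -> Prop) b c :
  nsub N -> (forall x y : G, cm N x y) -> Conn U b c ->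
  forall w, U b w -> exists w', U c w' /\ eqv N w w'.
Proof.
  intros HN Hab [g Hg] w Hw. exists (g · (w · ginv g)). split. apply Hg; auto.
  apply eqv_sym; auto. apply cm_conj; auto.
Qed.


Lemma perH {G : group} (U : root -> G -> Prop) phi psi C :
  RGD U -> (forall x : G, gen (fun z => exists a, U a z) x) ->
  cond_i U phi psi -> cond_ii U C -> (cond_i' U phi psi \/ cond_i'' U phi psi) ->
  forall H, is_subgroup H -> finite_index H ->
  nsub (core H) /\ (forall b c y z, snd b = snd c -> U b y -> U c z -> cm (core H) y z)
  /\ (forall x y, cm (core H) x y).
Proof.
  intros HR Hgen Hi Hii Hcase H SH [n Hn].
  assert (HN := core_nsub SH).
  assert (Hpow := core_pow SH Hn).
  assert (Hsd := far_cm HR Hii HN Hpow).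
  split; auto. split; auto.
  destruct Hi as [Hpre [x [Hx Hxne]]].
  assert (Hcomm := fun x (Hx : comm_sub (U phi) (U psi) x) => comm_in_N U phi psi HN Hsd (prenil_dir Hpre) Hx).
  apply (abel HR HN Hgen Hsd).
  destruct Hcase as [[g Hg]|[Heq _]].
  - pose proof HR as [_ [H0 _]]. destruct (H0 g) as [u [Hu Hne]].
    exists g, u. split; auto.
  - subst psi. exists phi, x. split; auto. apply comm_sub_self; auto. apply HR.
Qed.

Lemma same_target_even n m : Z.even n = Z.even m -> target n = target m.
Proof. unfold target. intros ->. reflexivity. Qed.

Unset Implicit Arguments.

Theorem mainTheorem2 (G : group) (U : root -> G -> Prop) (phi psi : root) (C : Z) :
  RGD U ->
  (forall a, finite_set (U a)) ->
  center_free G ->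
  (forall x : G, gen (fun z => exists a, U a z) x) ->
  cond_i U phi psi ->
  cond_ii U C ->
  (cond_i' U phi psi \/ cond_i'' U phi psi) ->
  (forall x y : G, Lambda0 G (commutator x y)) /\
  (cond_i' U phi psi ->
     forall M : nat, (forall a k, has_card (U a) k -> (k <= M)%nat) ->
       index_le (full G) (Lambda0 G) M) /\
  (cond_i'' U phi psi ->
     forall M : nat, (forall a, index_le (U a) (comm_sub (U a) (U a)) M) ->
       index_le (full G) (Lambda0 G) (M * M)).
Proof.
  intros HR Hfin Hcf Hgen Hi Hii Hcase.
  pose proof HR as [Hsg _].
  split; [|split].
  - intros x y H SH FH. apply core_sub.
    destruct (perH HR Hgen Hi Hii Hcase SH FH) as [HN [_ Hab]].
    apply cm_N_comm. apply Hab.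
  - intros [g Hg] M HM.
    set (beta := target (fst g + 1)).
    destruct (Hfin beta) as [l Hl].
    set (R0 := filter (fun z => if excluded_middle_informative (U beta z) then true else false) l).
    set (R := nodup (fun x y : G => excluded_middle_informative (x = y)) R0).
    assert (InR : forall z, U beta z <-> In z R).
    { intro z. unfold R. rewrite nodup_In. unfold R0. rewrite filter_In.
      destruct (excluded_middle_informative (U beta z)); split; intuition; discriminate. }
    assert (LR : (length R <= M)%nat).
    { apply (HM beta). exists R. split; [apply NoDup_nodup| split; auto]. }
    apply (index_final R LR). intros x H SH FH.
    destruct (perH HR Hgen Hi Hii (or_introl (ex_intro _ g Hg)) SH FH) as [HN [Hsd Hab]].
    set (N := core H) in *.
    destruct Hi as [Hpre _].
    assert (Ng : forall w, U g w -> N w).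
    { intros w Hw. apply (comm_in_N U phi psi HN Hsd (prenil_dir Hpre)). apply Hg; auto. }
    set (S := fun x => exists u, U beta u /\ eqv N x u).
    assert (Sx : S x).
    { specialize (Hgen x). induction Hgen as [|w [b Hw]|x1 x2 G1 IHg0_1 G2 IHg0_2|x1 G1 IHg0].
      - exists gone. split. apply sg1; auto. apply eqv_refl; auto.
      - destruct (image HN Hab (conn_target b HR) _ Hw) as [w' [Hw' E]].
        destruct (Bool.bool_dec (Z.even (fst b)) (Z.even (fst g))) as [D|D].
        + rewrite (same_target_even _ _ D) in Hw'.
          destruct (image HN Hab (conn_sym (conn_target g HR)) _ Hw') as [w'' [Hw'' E']].
          exists gone. split. apply sg1; auto.
          apply (eqv_trans HN E). apply (eqv_trans HN E'). apply eqv_sym; auto.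
          apply eqv_N. auto.
        + exists w'. split; auto. unfold beta. rewrite <- (same_target_even (fst b)); auto.
          rewrite even1. destruct (Z.even (fst b)), (Z.even (fst g)); simpl; congruence.
      - destruct IHg0_1 as [u1 [Hu1 E1]]. destruct IHg0_2 as [u2 [Hu2 E2]].
        exists (u1 · u2). split. apply sgM; auto. apply eqv_mul; auto.
      - destruct IHg0 as [u1 [Hu1 E1]]. exists (ginv u1). split. apply sgV; auto. apply eqv_inv; auto. }
    destruct Sx as [u [Hu E]]. exists u. split. apply InR; auto.
    apply core_sub. apply eqv_sym; auto.
  - intros [Heq _] M HM.
    destruct (HM a0) as [l0 [L0 C0]]. destruct (HM a1) as [l1 [L1 C1]].
    set (R := map (fun p => fst p · snd p) (list_prod l0 l1)).
    assert (LR : (length R <= M * M)%nat).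
    { unfold R. rewrite length_map, length_prod. apply Nat.mul_le_mono; auto. }
    apply (index_final R LR). intros x H SH FH.
    destruct (perH HR Hgen Hi Hii Hcase SH FH) as [HN [Hsd Hab]].
    set (N := core H) in *.
    set (S := fun x => exists u0 u1, U a0 u0 /\ U a1 u1 /\ eqv N x (u0 · u1)).
    assert (Sx : S x).
    { specialize (Hgen x). induction Hgen as [|w [b Hw]|x1 x2 G1 IHg0_1 G2 IHg0_2|x1 G1 IHg0].
      - exists gone, gone. split. apply sg1; auto. split. apply sg1; auto. gs. apply eqv_refl; auto.
      - destruct (image HN Hab (conn_target b HR) _ Hw) as [w' [Hw' E]].
        unfold target in Hw'. destruct (Z.even (fst b)).
        + exists w', gone. split; auto. split. apply sg1; auto. gs. auto.
        + exists gone, w'. split. apply sg1; auto. split; auto. gs. auto.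
      - destruct IHg0_1 as [u0 [u1 [H0 [H1 E1]]]]. destruct IHg0_2 as [v0 [v1 [K0 [K1 E2]]]].
        exists (u0 · v0), (u1 · v1). split. apply sgM; auto. split. apply sgM; auto.
        apply (eqv_trans HN (eqv_mul HN E1 E2)).
        apply (eqv_trans (y := u0 · ((u1 · v0) · v1))) ; [auto| apply eqv_eq; auto; gs; reflexivity|].
        apply (eqv_trans (y := u0 · ((v0 · u1) · v1))) ; [auto| |apply eqv_eq; auto; gs; reflexivity].
        apply eqv_mul; [auto| apply eqv_refl; auto|]. apply eqv_mul; [auto| apply Hab | apply eqv_refl; auto].
      - destruct IHg0 as [u0 [u1 [H0 [H1 E1]]]].
        exists (ginv u0), (ginv u1). split. apply sgV; auto. split. apply sgV; auto.
        apply (eqv_trans HN (eqv_inv HN E1)). gs. apply Hab. }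
    destruct Sx as [u0 [u1 [Hu0 [Hu1 E]]]].
    destruct (C0 u0 Hu0) as [p [Ip Kp]]. destruct (C1 u1 Hu1) as [q [Iq Kq]].
    assert (Np : eqv N p u0) by (apply (comm_in_N U a0 a0 HN Hsd eq_refl); auto).
    assert (Nq : eqv N q u1) by (apply (comm_in_N U a1 a1 HN Hsd eq_refl); auto).
    exists (p · q). split.
    + unfold R. apply (in_map (fun p => fst p · snd p) _ (p, q)). apply in_prod; auto.
    + apply core_sub. apply (eqv_trans HN (eqv_mul HN Np Nq)). apply eqv_sym; auto.
Qed.
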